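(* Let $E>0$, $\epsilon>0$ with $1-2\epsilon\ge0$, and let $B\in\mathbb R^3$ be a unit vector. Let $\mu,\mu_1,\mu_2$ be distinct points on the sphere $\sqrt E S^2=\{x\in\mathbb R^3:|x|=\sqrt E\}$, and assume that $$\left\langle\frac{\mu_i-\mu}{|\mu_i-\mu|},B\right\rangle>\sqrt{1-2\epsilon}\quad\text{for } i=1,2.$$ Then $|\mu_2-\mu_1|\le16\sqrt{\epsilon E}$. *)

(* Defs.v *)
From mathcomp Require Import all_boot all_order all_algebra.
From mathcomp Require Import reals.
Set Implicit Arguments. Unset Strict Implicit. Unset Printing Implicit Defensive.
Import Order.TTheory GRing.Theory Num.Theory.
Local Open Scope ring_scope.

Definition dotv (R : realType) (n : nat) (u v : 'rV[R]_n) : R :=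
  \sum_(i < n) u 0 i * v 0 i.

Definition enorm (R : realType) (n : nat) (u : 'rV[R]_n) : R :=
  Num.sqrt (dotv u u).

(* Main.v *)
Require Import Defs.
From mathcomp Require Import all_boot all_order all_algebra.
From mathcomp Require Import reals ring lra.
Import Order.TTheory GRing.Theory Num.Theory.
Local Open Scope ring_scope.
Lemma cs3 (R : realType) (u v : 'rV[R]_3) : dotv u v ^+ 2 <= dotv u u * dotv v v.
Proof. rewrite /dotv !big_ord_recr !big_ord0 /= !add0r.
set a0 := u 0 _; set a1 := u 0 _; set a2 := u 0 _.
set b0 := v 0 _; set b1 := v 0 _; set b2 := v 0 _.
have h : (a0 * b0 + a1 * b1 + a2 * b2) ^+ 2 + ((a0*b1-a1*b0)^+2 + (a0*b2-a2*b0)^+2 + (a1*b2-a2*b1)^+2) =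
  (a0 * a0 + a1 * a1 + a2 * a2) * (b0 * b0 + b1 * b1 + b2 * b2) by ring.
rewrite -h lerDl; by rewrite !addr_ge0 ?sqr_ge0.
Qed.
Lemma sq_le (R : realType) (x y : R) : 0 <= x -> 0 <= y -> x ^+ 2 <= y ^+ 2 -> x <= y.
Proof. move=> hx hy h; nra. Qed.
Section S.
Context {R : realType}.
Implicit Types (u v w : 'rV[R]_3) (a : R).
Lemma dotvC u v : dotv u v = dotv v u.
Proof. by rewrite /dotv; apply: eq_bigr => i _; rewrite mulrC. Qed.
Lemma dotvDl u v w : dotv (u + v) w = dotv u w + dotv v w.
Proof. by rewrite /dotv -big_split; apply: eq_bigr => i _; rewrite !mxE mulrDl. Qed.
Lemma dotvZl a u w : dotv (a *: u) w = a * dotv u w.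
Proof. by rewrite /dotv mulr_sumr; apply: eq_bigr => i _; rewrite !mxE mulrA. Qed.
Lemma dotvNl u w : dotv (- u) w = - dotv u w.
Proof. by rewrite /dotv -sumrN; apply: eq_bigr => i _; rewrite !mxE mulNr. Qed.
Lemma dotvBl u v w : dotv (u - v) w = dotv u w - dotv v w.
Proof. by rewrite dotvDl dotvNl. Qed.
Lemma dotvDr u v w : dotv w (u + v) = dotv w u + dotv w v.
Proof. by rewrite !(dotvC w) dotvDl. Qed.
Lemma dotvZr a u w : dotv w (a *: u) = a * dotv w u.
Proof. by rewrite !(dotvC w) dotvZl. Qed.
Lemma dotvNr u w : dotv w (- u) = - dotv w u.
Proof. by rewrite !(dotvC w) dotvNl. Qed.
Lemma dotvBr u v w : dotv w (u - v) = dotv w u - dotv w v.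
Proof. by rewrite dotvDr dotvNr. Qed.
Lemma dotv0l w : dotv 0 w = 0.
Proof. by rewrite /dotv big1 // => i _; rewrite mxE mul0r. Qed.
Lemma dotv_ge0 u : 0 <= dotv u u.
Proof. by rewrite /dotv sumr_ge0 // => i _; rewrite -expr2 sqr_ge0. Qed.
Lemma enorm_ge0 u : 0 <= enorm u.
Proof. exact: sqrtr_ge0. Qed.
Lemma enorm_sq u : enorm u ^+ 2 = dotv u u.
Proof. by rewrite /enorm sqr_sqrtr ?dotv_ge0. Qed.
Lemma cs_abs u v : `|dotv u v| <= enorm u * enorm v.
Proof.
have h := @cs3 R u v.
rewrite -(real_normK (num_real (dotv u v))) in h.
apply: sq_le; rewrite ?normr_ge0 ?mulr_ge0 ?enorm_ge0 //.
by rewrite exprMn !enorm_sq.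
Qed.
Lemma cs u v : dotv u v <= enorm u * enorm v.
Proof. exact: le_trans (ler_norm _) (cs_abs u v). Qed.
Lemma enormD u v : enorm (u + v) <= enorm u + enorm v.
Proof.
have h := cs u v. have e1 := enorm_sq u. have e2 := enorm_sq v. have e3 := enorm_sq (u + v).
rewrite dotvDl !dotvDr (dotvC v u) in e3.
apply: sq_le; rewrite ?addr_ge0 ?enorm_ge0 //. rewrite e3 sqrrD e1 e2. lra.
Qed.
Lemma enormZ a u : enorm (a *: u) = `|a| * enorm u.
Proof. by rewrite /enorm dotvZl dotvZr mulrA -expr2 sqrtrM ?sqr_ge0 // sqrtr_sqr. Qed.
Lemma enormN u : enorm (- u) = enorm u.
Proof. by rewrite /enorm dotvNl dotvNr opprK. Qed.
End S.
Lemma side {R : realType} (E eps : R) (B mu mu1 : 'rV[R]_3) :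
  0 < E -> 0 < eps -> 0 <= 1 - 2 * eps ->
  enorm B = 1 -> enorm mu = Num.sqrt E -> enorm mu1 = Num.sqrt E ->
  dotv ((enorm (mu1 - mu))^-1 *: (mu1 - mu)) B > Num.sqrt (1 - 2 * eps) ->
  exists d b, [/\ 0 < d, mu1 - mu = d *: b, enorm b = 1, d = -2 * dotv mu b
     & enorm (b - B) < 2 * Num.sqrt eps].
Proof.
move=> E0 eps0 s0 nB nm nm1 h1.
set s := Num.sqrt (1 - 2 * eps) in h1.
set u1 := mu1 - mu in h1 *. set d1 := enorm u1 in h1.
have s_ge0 : 0 <= s by apply: sqrtr_ge0.
have d1n0 : d1 != 0.
  apply: (contraTneq _ h1) => ->; by rewrite invr0 scale0r dotv0l -leNgt.
have d1p : 0 < d1 by rewrite lt0r d1n0 enorm_ge0.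
set b1 := d1^-1 *: u1 in h1.
have u1E : u1 = d1 *: b1 by rewrite /b1 scalerA divff // scale1r.
have nb1 : enorm b1 = 1 by rewrite /b1 enormZ ger0_norm ?invr_ge0 ?enorm_ge0 // mulVf.
clearbody b1.
exists d1, b1; split => //.
  have e1 : dotv mu1 mu1 = dotv mu mu by rewrite -!enorm_sq nm nm1.
  have m1E : mu1 = mu + d1 *: b1 by rewrite -u1E /u1 addrC subrK.
  rewrite m1E !dotvDl !dotvDr !dotvZl !dotvZr -(enorm_sq b1) nb1 (dotvC b1 mu) in e1.
  have : d1 * (d1 + 2 * dotv mu b1) == 0.
    apply/eqP; rewrite expr1n mulr1 in e1; lra.
  rewrite mulf_eq0 (negbTE d1n0) /= => /eqP; lra.
have ss : s ^+ 2 = 1 - 2 * eps by rewrite sqr_sqrtr.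
have se : Num.sqrt eps ^+ 2 = eps by rewrite sqr_sqrtr // ltW.
have e2 : enorm (b1 - B) ^+ 2 = 2 - 2 * dotv b1 B.
  rewrite enorm_sq dotvBl !dotvBr -!enorm_sq nB nb1 (dotvC B b1); lra.
have := sqrtr_ge0 eps. have := enorm_ge0 (b1 - B). nra.
Qed.
Theorem lemma5p5 (R : realType) (E eps : R) (B mu mu1 mu2 : 'rV[R]_3) :
  0 < E -> 0 < eps -> 0 <= 1 - 2 * eps ->
  enorm B = 1 ->
  enorm mu = Num.sqrt E -> enorm mu1 = Num.sqrt E -> enorm mu2 = Num.sqrt E ->
  mu != mu1 -> mu != mu2 -> mu1 != mu2 ->
  dotv ((enorm (mu1 - mu))^-1 *: (mu1 - mu)) B > Num.sqrt (1 - 2 * eps) ->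
  dotv ((enorm (mu2 - mu))^-1 *: (mu2 - mu)) B > Num.sqrt (1 - 2 * eps) ->
  enorm (mu2 - mu1) <= 16 * Num.sqrt (eps * E).
Proof.
move=> E0 eps0 s0 nB nm nm1 nm2 _ _ _ h1 h2.
have [d1 [b1 [d1p u1E nb1 d1E hb1]]] := @side R E eps B mu mu1 E0 eps0 s0 nB nm nm1 h1.
have [d2 [b2 [d2p u2E nb2 d2E hb2]]] := @side R E eps B mu mu2 E0 eps0 s0 nB nm nm2 h2.
have -> : mu2 - mu1 = d2 *: (b2 - b1) + (d2 - d1) *: b1.
  rewrite scalerBr scalerBl addrA subrK -u1E -u2E.
  by rewrite opprB addrA subrK.
have x1 : enorm (b2 - b1) < 4 * Num.sqrt eps.
  have -> : b2 - b1 = (b2 - B) + - (b1 - B) by rewrite opprB addrA subrK.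
  apply: le_lt_trans (enormD _ _) _; rewrite enormN; lra.
have x2 : d2 <= 2 * Num.sqrt E.
  have := cs mu b2; rewrite nm nb2 mulr1 d2E.
  have := cs_abs mu b2; rewrite nm nb2 mulr1.
  rewrite ler_norml; lra.
have x3 : `|d2 - d1| <= 2 * Num.sqrt E * enorm (b2 - b1).
  have -> : d2 - d1 = 2 * dotv mu (b1 - b2) by rewrite d1E d2E dotvBr; lra.
  rewrite normrM ger0_norm // -mulrA ler_pM2l //.
  have := cs_abs mu (b1 - b2); rewrite nm -enormN opprB //.
apply: le_trans (enormD _ _) _.
rewrite !enormZ nb1 mulr1 (ger0_norm (ltW d2p)) sqrtrM; last exact: ltW.
have := enorm_ge0 (b2 - b1). have := sqrtr_ge0 E. have := sqrtr_ge0 eps.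
nra.
Qed.
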